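(* Let $n\ge 2$ and $P,Q\in\Gamma_n$. Then \[ D_{I\Delta}\le \tfrac23 D_{h\Delta}\le 2D_{hI}\le D_{TJ}, \] \[ D_{I\Delta}\le \tfrac23 D_{h\Delta}\le \tfrac12 D_{J\Delta}\le \tfrac13 D_{T\Delta}\le D_{TJ}, \] and \[ D_{TJ}\le \tfrac23 D_{Th}\le 2D_{Jh}\le \tfrac16 D_{\Psi\Delta}\le \tfrac15 D_{\Psi I}\le \tfrac29 D_{\Psi h}\le \tfrac14 D_{\Psi J}\le \tfrac13 D_{\Psi T}, \] where all quantities are evaluated at $(P\|Q)$.
   Context: $\Gamma_n=\{P=(p_1,\dots,p_n): p_i>0,\ \sum_{i=1}^n p_i=1\}$. For $P,Q\in\Gamma_n$: $h(P\|Q)=\frac12\sum_{i=1}^n(\sqrt{p_i}-\sqrt{q_i})^2$; $\Delta(P\|Q)=\sum_{i=1}^n\frac{(p_i-q_i)^2}{p_i+q_i}$; $\Psi(P\|Q)=\sum_{i=1}^n\frac{(p_i-q_i)^2(p_i+q_i)}{p_iq_i}$; $J(P\|Q)=\sum_{i=1}^n(p_i-q_i)\ln\frac{p_i}{q_i}$; $I(P\|Q)=\frac12\Big[\sum_{i=1}^n p_i\ln\frac{2p_i}{p_i+q_i}+\sum_{i=1}^n q_i\ln\frac{2q_i}{p_i+q_i}\Big]$; $T(P\|Q)=\sum_{i=1}^n\frac{p_i+q_i}{2}\ln\frac{p_i+q_i}{2\sqrt{p_iq_i}}$. Differences: $D_{\Psi T}=\frac1{16}\Psi-T$, $D_{\Psi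 J}=\frac1{16}\Psi-\frac18J$, $D_{\Psi h}=\frac1{16}\Psi-h$, $D_{\Psi I}=\frac1{16}\Psi-I$, $D_{\Psi\Delta}=\frac1{16}\Psi-\frac14\Delta$, $D_{TJ}=T-\frac18J$, $D_{Th}=T-h$, $D_{T\Delta}=T-\frac14\Delta$, $D_{Jh}=\frac18J-h$, $D_{J\Delta}=\frac18J-\frac14\Delta$, $D_{hI}=h-I$, $D_{h\Delta}=h-\frac14\Delta$, $D_{I\Delta}=I-\frac14\Delta$ (all evaluated at $(P\|Q)$). *)

(* Defs.v *)
(* concrete reals R. Probability vectors are functions nat -> R,
   only indices 0..n-1 are relevant. *)
From Stdlib Require Import Reals.
Open Scope R_scope.

Fixpoint sumR (n : nat) (f : nat -> R) : R :=
  match n with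
  | O => 0
  | S m => sumR m f + f m
  end.

Definition Gamma (n : nat) (p : nat -> R) : Prop :=
  (forall i, (i < n)%nat -> 0 < p i) /\ sumR n p = 1.

Definition hel (n : nat) (p q : nat -> R) : R :=
  / 2 * sumR n (fun i => (sqrt (p i) - sqrt (q i)) ^ 2).
Definition Delta (n : nat) (p q : nat -> R) : R :=
  sumR n (fun i => (p i - q i) ^ 2 / (p i + q i)).
Definition Psi (n : nat) (p q : nat -> R) : R :=
  sumR n (fun i => (p i - q i) ^ 2 * (p i + q i) / (p i * q i)).
Definition Jdiv (n : nat) (p q : nat -> R) : R :=
  sumR n (fun i => (p i - q i) * ln (p i / q i)).
Definition Idiv (n : nat) (p q : nat -> R) : R :=
  / 2 * (sumR n (fun i => p i * ln (2 * p i / (p i + q i)))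
         + sumR n (fun i => q i * ln (2 * q i / (p i + q i)))).
Definition Tdiv (n : nat) (p q : nat -> R) : R :=
  sumR n (fun i => (p i + q i) / 2 * ln ((p i + q i) / (2 * sqrt (p i * q i)))).

Section Diffs.
Variables (n : nat) (p q : nat -> R).
Definition D_PsiT := / 16 * Psi n p q - Tdiv n p q.
Definition D_PsiJ := / 16 * Psi n p q - / 8 * Jdiv n p q.
Definition D_Psih := / 16 * Psi n p q - hel n p q.
Definition D_PsiI := / 16 * Psi n p q - Idiv n p q.
Definition D_PsiDelta := / 16 * Psi n p q - / 4 * Delta n p q.
Definition D_TJ := Tdiv n p q - / 8 * Jdiv n p q.
Definition D_Th := Tdiv n p q - hel n p q.
Definition D_TDelta := Tdiv n p q - / 4 * Delta n p q.
Definition D_Jh := / 8 * Jdiv n p q - hel n p q.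
Definition D_JDelta := / 8 * Jdiv n p q - / 4 * Delta n p q.
Definition D_hI := hel n p q - Idiv n p q.
Definition D_hDelta := hel n p q - / 4 * Delta n p q.
Definition D_IDelta := Idiv n p q - / 4 * Delta n p q.
End Diffs.

(* Main.v *)
Require Import Defs.
From Stdlib Require Import Reals.
From Stdlib Require Import Lra Psatz.
From Coquelicot Require Import Coquelicot.
Import Defs.
Open Scope R_scope.

Definition fh x := (sqrt x - 1)^2 / 2.
Definition fD x := (x-1)^2/(x+1).
Definition fP x := (x-1)^2*(x+1)/x.
Definition fJ x := (x-1)*ln x.
Definition fI x := /2 * (x * ln (2*x/(x+1)) + ln (2/(x+1))).
Definition fT x := (x+1)/2 * ln ((x+1)/(2*sqrt x)).

Definition d1h x := /2 * (1 - / sqrt x).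
Definition d1D x := (x-1)*(x+3)/(x+1)^2.
Definition d1P x := 2*x - 1 - /x^2.
Definition d1J x := ln x + 1 - /x.
Definition d1I x := /2 * ln (2*x/(x+1)).
Definition d1T x := /2 * ln ((x+1)/(2*sqrt x)) + (x-1)/(4*x).

Definition d2h x := /(4*x*sqrt x).
Definition d2D x := 8/(x+1)^3.
Definition d2P x := 2 + 2/x^3.
Definition d2J x := /x + /x^2.
Definition d2I x := /(2*x*(x+1)).
Definition d2T x := (x^2+1)/(4*x^2*(x+1)).

Ltac sqt x Hx :=
  let E := fresh "E" in let s := fresh "s" in let Hs := fresh "Hs" in
  assert (Hs : 0 < sqrt x) by (apply sqrt_lt_R0; lra);
  pose proof (sqrt_sqrt x (Rlt_le _ _ Hx)) as E;
  set (s := sqrt x) in *; try rewrite <- E; clearbody s.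

Lemma dh x : 0 < x -> is_derive fh x (d1h x).
Proof. intros Hx. unfold fh, d1h. auto_derive. lra.
  sqt x Hx. field. lra. Qed.
Lemma dh2 x : 0 < x -> is_derive d1h x (d2h x).
Proof. intros Hx. unfold d2h, d1h. auto_derive. split. lra. split. 
  apply Rgt_not_eq, sqrt_lt_R0; lra. auto.
  sqt x Hx. field. lra. Qed.
Lemma dD x : 0 < x -> is_derive fD x (d1D x).
Proof. intros Hx. unfold fD, d1D. auto_derive. lra. field. lra. Qed.
Lemma dD2 x : 0 < x -> is_derive d1D x (d2D x).
Proof. intros Hx. unfold d2D, d1D. auto_derive. intro; nra. field. lra. Qed.
Lemma dP x : 0 < x -> is_derive fP x (d1P x).
Proof. intros Hx. unfold fP, d1P. auto_derive. lra. field. lra. Qed.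
Lemma dP2 x : 0 < x -> is_derive d1P x (d2P x).
Proof. intros Hx. unfold d2P, d1P. auto_derive. intro; nra. field. lra. Qed.
Lemma dJ x : 0 < x -> is_derive fJ x (d1J x).
Proof. intros Hx. unfold fJ, d1J. auto_derive. lra. field. lra. Qed.
Lemma dJ2 x : 0 < x -> is_derive d1J x (d2J x).
Proof. intros Hx. unfold d2J, d1J. auto_derive. lra. field. lra. Qed.
Lemma dI x : 0 < x -> is_derive fI x (d1I x).
Proof. intros Hx. unfold fI, d1I. auto_derive.
  repeat split; try lra; apply Rdiv_lt_0_compat; lra.
  unfold Rdiv. field. lra. Qed.
Lemma dI2 x : 0 < x -> is_derive d1I x (d2I x).
Proof. intros Hx. unfold d2I, d1I. auto_derive.
  repeat split; try lra; apply Rdiv_lt_0_compat; lra.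
  field. lra. Qed.
Lemma dT x : 0 < x -> is_derive fT x (d1T x).
Proof. intros Hx. unfold fT, d1T. auto_derive.
  assert (0 < sqrt x) by (apply sqrt_lt_R0; lra).
  repeat split; try lra. apply Rdiv_lt_0_compat; lra.
  unfold Rdiv. set (L := ln _). sqt x Hx. field. lra. Qed.
Lemma dT2 x : 0 < x -> is_derive d1T x (d2T x).
Proof. intros Hx. unfold d2T, d1T. auto_derive.
  assert (0 < sqrt x) by (apply sqrt_lt_R0; lra).
  repeat split; try lra. apply Rdiv_lt_0_compat; lra.
  sqt x Hx. field. lra. Qed.

Lemma isd_plus (f g : R -> R) df dg x : is_derive f x df -> is_derive g x dg -> is_derive (fun y => f y + g y) x (df + dg).
Proof. intros; now apply (is_derive_plus f g). Qed.
Lemma isd_scal c (f : R -> R) df x : is_derive f x df -> is_derive (fun y => c * f y) x (c * df).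
Proof. intros; now apply (is_derive_scal f). Qed.

Definition phi0 cP cT cJ ch cI cD x := cP*fP x + cT*fT x + cJ*fJ x + ch*fh x + cI*fI x + cD*fD x.
Definition phi1 cP cT cJ ch cI cD x := cP*d1P x + cT*d1T x + cJ*d1J x + ch*d1h x + cI*d1I x + cD*d1D x.
Definition phi2 cP cT cJ ch cI cD x := cP*d2P x + cT*d2T x + cJ*d2J x + ch*d2h x + cI*d2I x + cD*d2D x.

Lemma dphi0 cP cT cJ ch cI cD x : 0 < x -> is_derive (phi0 cP cT cJ ch cI cD) x (phi1 cP cT cJ ch cI cD x).
Proof. intros Hx. unfold phi0, phi1.
  repeat apply isd_plus; apply isd_scal;
  first [apply dP | apply dT | apply dJ | apply dh | apply dI | apply dD]; auto. Qed.
Lemma dphi1 cP cT cJ ch cI cD x : 0 < x -> is_derive (phi1 cP cT cJ ch cI cD) x (phi2 cP cT cJ ch cI cD x).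
Proof. intros Hx. unfold phi1, phi2.
  repeat apply isd_plus; apply isd_scal;
  first [apply dP2 | apply dT2 | apply dJ2 | apply dh2 | apply dI2 | apply dD2]; auto. Qed.

Lemma phi0_1 cP cT cJ ch cI cD : phi0 cP cT cJ ch cI cD 1 = 0.
Proof. unfold phi0, fP, fT, fJ, fh, fI, fD. rewrite sqrt_1.
  replace (2*1/(1+1)) with 1 by field. replace (2/(1+1)) with 1 by field.
  replace ((1+1)/(2*1)) with 1 by field. rewrite ln_1. field. Qed.
Lemma phi1_1 cP cT cJ ch cI cD : phi1 cP cT cJ ch cI cD 1 = 0.
Proof. unfold phi1, d1P, d1T, d1J, d1h, d1I, d1D. rewrite sqrt_1.
  replace (2*1/(1+1)) with 1 by field.
  replace ((1+1)/(2*1)) with 1 by field. rewrite ln_1. field. Qed.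

Lemma convex0 (f f1 f2 : R -> R) :
  (forall x, 0 < x -> is_derive f x (f1 x)) ->
  (forall x, 0 < x -> is_derive f1 x (f2 x)) ->
  (forall x, 0 < x -> 0 <= f2 x) -> f 1 = 0 -> f1 1 = 0 ->
  forall x, 0 < x -> 0 <= f x.
Proof.
  intros D1 D2 P2 F0 F1 x Hx.
  destruct (Rtotal_order x 1) as [Hlt|[Heq|Hgt]].
  - destruct (MVT_cor2 f f1 x 1 Hlt) as [c [Ec Hc]].
    { intros c Hc. apply is_derive_Reals. apply D1. lra. }
    destruct (MVT_cor2 f1 f2 c 1 (proj2 Hc)) as [d [Ed Hd]].
    { intros e He. apply is_derive_Reals. apply D2. lra. }
    assert (0 <= f2 d) by (apply P2; lra).
    assert (f1 c <= 0) by nra. nra.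
  - subst. lra.
  - destruct (MVT_cor2 f f1 1 x Hgt) as [c [Ec Hc]].
    { intros c Hc. apply is_derive_Reals. apply D1. lra. }
    destruct (MVT_cor2 f1 f2 1 c (proj1 Hc)) as [d [Ed Hd]].
    { intros e He. apply is_derive_Reals. apply D2. lra. }
    assert (0 <= f2 d) by (apply P2; lra).
    assert (0 <= f1 c) by nra. nra.
Qed.

Definition G cP cT cJ ch cI cD s :=
  cP*(2+2/s^6) + cT*((s^4+1)/(4*s^4*(s^2+1))) + cJ*(/s^2+/s^4) + ch*(/(4*s^3))
  + cI*(/(2*s^2*(s^2+1))) + cD*(8/(s^2+1)^3).

Lemma phi2_G cP cT cJ ch cI cD x : 0 < x ->
  phi2 cP cT cJ ch cI cD x = G cP cT cJ ch cI cD (sqrt x).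
Proof. intros Hx. unfold phi2, G, d2P, d2T, d2J, d2h, d2I, d2D.
  sqt x Hx. field. nra. Qed.

Lemma phi0_nonneg cP cT cJ ch cI cD :
  (forall s, 0 < s -> 0 <= G cP cT cJ ch cI cD s) ->
  forall x, 0 < x -> 0 <= phi0 cP cT cJ ch cI cD x.
Proof.
  intros HG. apply (convex0 _ (phi1 cP cT cJ ch cI cD) (phi2 cP cT cJ ch cI cD)).
  - apply dphi0.
  - apply dphi1.
  - intros x Hx. rewrite phi2_G; auto. apply HG, sqrt_lt_R0; lra.
  - apply phi0_1.
  - apply phi1_1.
Qed.

Lemma sumR_nonneg n f : (forall i, (i < n)%nat -> 0 <= f i) -> 0 <= sumR n f.
Proof. induction n; intros H; cbn [sumR]. lra.
  assert (0 <= f n) by (apply H; lia). assert (0 <= sumR n f) by (apply IHn; intros; apply H; lia). lra. Qed.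

Definition term cP cT cJ ch cI cD (a b : R) :=
  cP*((a-b)^2*(a+b)/(a*b)) + cT*((a+b)/2*ln((a+b)/(2*sqrt(a*b)))) + cJ*((a-b)*ln(a/b))
  + ch*(/2*(sqrt a - sqrt b)^2) + cI*(/2*(a*ln(2*a/(a+b)) + b*ln(2*b/(a+b)))) + cD*((a-b)^2/(a+b)).

Lemma sum_combo cP cT cJ ch cI cD n p q :
  cP*Psi n p q + cT*Tdiv n p q + cJ*Jdiv n p q + ch*hel n p q + cI*Idiv n p q + cD*Delta n p q
  = sumR n (fun i => term cP cT cJ ch cI cD (p i) (q i)).
Proof. unfold Psi, Tdiv, Jdiv, hel, Idiv, Delta, term.
  induction n; cbn [sumR]. ring. rewrite <- IHn. ring. Qed.

Lemma term_eq cP cT cJ ch cI cD a b : 0 < a -> 0 < b ->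
  term cP cT cJ ch cI cD a b = b * phi0 cP cT cJ ch cI cD (a/b).
Proof. intros Ha Hb.
  remember (a/b) as x eqn:Ex.
  assert (Hx : 0 < x) by (subst; apply Rdiv_lt_0_compat; lra).
  assert (Ea : a = b*x) by (subst; field; lra). subst a. clear Ex.
  unfold term, phi0, fP, fT, fJ, fh, fI, fD.
  replace (b*x/b) with x by (field; lra).
  replace (2*(b*x)/(b*x+b)) with (2*x/(x+1)) by (field; nra).
  replace (2*b/(b*x+b)) with (2/(x+1)) by (field; nra).
  assert (Hsx : 0 < sqrt x) by (apply sqrt_lt_R0; lra).
  replace (sqrt (b*x*b)) with (b*sqrt x).
  2:{ replace (b*x*b) with ((b*b)*x) by ring. rewrite sqrt_mult by nra. rewrite sqrt_square by lra. ring. }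
  replace ((b*x+b)/(2*(b*sqrt x))) with ((x+1)/(2*sqrt x)) by (field; lra).
  rewrite sqrt_mult by lra.
  set (L1 := ln x). set (L2 := ln (2*x/(x+1))). set (L3 := ln (2/(x+1))). set (L4 := ln ((x+1)/(2*sqrt x))).
  clearbody L1 L2 L3 L4.
  sqt b Hb. field. split; nra.
Qed.

Lemma combo cP cT cJ ch cI cD n p q :
  (forall i, (i < n)%nat -> 0 < p i) -> (forall i, (i < n)%nat -> 0 < q i) ->
  (forall s, 0 < s -> 0 <= G cP cT cJ ch cI cD s) ->
  0 <= cP*Psi n p q + cT*Tdiv n p q + cJ*Jdiv n p q + ch*hel n p q + cI*Idiv n p q + cD*Delta n p q.
Proof. intros Hp Hq HG. rewrite sum_combo. apply sumR_nonneg. intros i Hi.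
  rewrite term_eq by auto. apply Rmult_le_pos. specialize (Hq i Hi); lra.
  apply phi0_nonneg; auto. apply Rdiv_lt_0_compat; auto. Qed.

Lemma G_pos cP cT cJ ch cI cD (Q : R -> R) :
  (forall s, 0 < s -> G cP cT cJ ch cI cD s * (4*s^6*(s^2+1)^3) = (s-1)^4 * Q s) ->
  (forall s, 0 < s -> 0 <= Q s) -> forall s, 0 < s -> 0 <= G cP cT cJ ch cI cD s.
Proof. intros HE HQ s Hs.
  assert (HD : 0 < 4*s^6*(s^2+1)^3).
  { apply Rmult_lt_0_compat. apply Rmult_lt_0_compat. lra. apply pow_lt; lra. apply pow_lt; nra. }
  assert (0 <= (s-1)^4 * Q s).
  { apply Rmult_le_pos. replace ((s-1)^4) with (((s-1)^2)^2) by ring. apply pow2_ge_0. auto. }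
  rewrite <- HE in H by auto. nra. Qed.

Ltac POSQ := repeat apply Rplus_le_le_0_compat; apply Rmult_le_pos; first [lra | apply pow_le; lra].
Lemma inst1 : forall s, 0 < s -> 0 <= G (0) (0) (0) (2/3) (-1) (1/12) s.
Proof. apply (G_pos _ _ _ _ _ _ (fun s => (2/3)*s^3 + (2/3)*s^4 + (2/3)*s^5)).
  - intros s Hs. unfold G. field; repeat split; apply Rgt_not_eq; first [nra | apply pow_lt; nra].
  - intros s Hs. POSQ. Qed.

Lemma inst2 : forall s, 0 < s -> 0 <= G (0) (0) (0) (4/3) (-2) (1/6) s.
Proof. apply (G_pos _ _ _ _ _ _ (fun s => (4/3)*s^3 + (4/3)*s^4 + (4/3)*s^5)).
  - intros s Hs. unfold G. field; repeat split; apply Rgt_not_eq; first [nra | apply pow_lt; nra].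
  - intros s Hs. POSQ. Qed.

Lemma inst3 : forall s, 0 < s -> 0 <= G (0) (1) (-1/8) (-2) (2) (0) s.
Proof. apply (G_pos _ _ _ _ _ _ (fun s => (1/2)*s^2 + (1)*s^4 + (1/2)*s^6)).
  - intros s Hs. unfold G. field; repeat split; apply Rgt_not_eq; first [nra | apply pow_lt; nra].
  - intros s Hs. POSQ. Qed.

Lemma inst5 : forall s, 0 < s -> 0 <= G (0) (0) (1/16) (-2/3) (0) (1/24) s.
Proof. apply (G_pos _ _ _ _ _ _ (fun s => (1/4)*s^2 + (1/3)*s^3 + (5/6)*s^4 + (1/3)*s^5 + (1/4)*s^6)).
  - intros s Hs. unfold G. field; repeat split; apply Rgt_not_eq; first [nra | apply pow_lt; nra].
  - intros s Hs. POSQ. Qed.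

Lemma inst6 : forall s, 0 < s -> 0 <= G (0) (1/3) (-1/16) (0) (0) (1/24) s.
Proof. apply (G_pos _ _ _ _ _ _ (fun s => (1/12)*s^2 + (1/3)*s^3 + (1/2)*s^4 + (1/3)*s^5 + (1/12)*s^6)).
  - intros s Hs. unfold G. field; repeat split; apply Rgt_not_eq; first [nra | apply pow_lt; nra].
  - intros s Hs. POSQ. Qed.

Lemma inst7 : forall s, 0 < s -> 0 <= G (0) (2/3) (-1/8) (0) (0) (1/12) s.
Proof. apply (G_pos _ _ _ _ _ _ (fun s => (1/6)*s^2 + (2/3)*s^3 + (1)*s^4 + (2/3)*s^5 + (1/6)*s^6)).
  - intros s Hs. unfold G. field; repeat split; apply Rgt_not_eq; first [nra | apply pow_lt; nra].
  - intros s Hs. POSQ. Qed.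

Lemma inst8 : forall s, 0 < s -> 0 <= G (0) (-1/3) (1/8) (-2/3) (0) (0) s.
Proof. apply (G_pos _ _ _ _ _ _ (fun s => (1/6)*s^2 + (1/3)*s^4 + (1/6)*s^6)).
  - intros s Hs. unfold G. field; repeat split; apply Rgt_not_eq; first [nra | apply pow_lt; nra].
  - intros s Hs. POSQ. Qed.

Lemma inst9 : forall s, 0 < s -> 0 <= G (0) (-2/3) (1/4) (-4/3) (0) (0) s.
Proof. apply (G_pos _ _ _ _ _ _ (fun s => (1/3)*s^2 + (2/3)*s^4 + (1/3)*s^6)).
  - intros s Hs. unfold G. field; repeat split; apply Rgt_not_eq; first [nra | apply pow_lt; nra].
  - intros s Hs. POSQ. Qed.

Lemma inst10 : forall s, 0 < s -> 0 <= G (1/96) (0) (-1/4) (2) (0) (-1/24) s.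
Proof. apply (G_pos _ _ _ _ _ _ (fun s => (1/12)*s^0 + (1/3)*s^1 + (1/12)*s^2 + (2/3)*s^3 + (-1/3)*s^4 + (2/3)*s^5 + (1/12)*s^6 + (1/3)*s^7 + (1/12)*s^8)).
  - intros s Hs. unfold G. field; repeat split; apply Rgt_not_eq; first [nra | apply pow_lt; nra].
  - intros s Hs. cbv beta.
    replace ((1/12)*s^0 + (1/3)*s^1 + (1/12)*s^2 + (2/3)*s^3 + (-1/3)*s^4 + (2/3)*s^5 + (1/12)*s^6 + (1/3)*s^7 + (1/12)*s^8)
      with ((1/12)*s^0 + (1/3)*s^1 + (1/12)*s^2 + (1/2)*s^3 + (1/2)*s^5 + (1/12)*s^6 + (1/3)*s^7 + (1/12)*s^8 + (1/6)*(s^3*(s-1)^2)) by field.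
    apply Rplus_le_le_0_compat. POSQ.
    apply Rmult_le_pos. lra. apply Rmult_le_pos. apply pow_le; lra. apply pow2_ge_0. Qed.

Lemma inst11 : forall s, 0 < s -> 0 <= G (1/480) (0) (0) (0) (-1/5) (1/24) s.
Proof. apply (G_pos _ _ _ _ _ _ (fun s => (1/60)*s^0 + (1/15)*s^1 + (13/60)*s^2 + (8/15)*s^3 + (11/15)*s^4 + (8/15)*s^5 + (13/60)*s^6 + (1/15)*s^7 + (1/60)*s^8)).
  - intros s Hs. unfold G. field; repeat split; apply Rgt_not_eq; first [nra | apply pow_lt; nra].
  - intros s Hs. POSQ. Qed.

Lemma inst12 : forall s, 0 < s -> 0 <= G (1/720) (0) (0) (-2/9) (1/5) (0) s.
Proof. apply (G_pos _ _ _ _ _ _ (fun s => (1/90)*s^0 + (2/45)*s^1 + (13/90)*s^2 + (2/15)*s^3 + (4/15)*s^4 + (2/15)*s^5 + (13/90)*s^6 + (2/45)*s^7 + (1/90)*s^8)).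
  - intros s Hs. unfold G. field; repeat split; apply Rgt_not_eq; first [nra | apply pow_lt; nra].
  - intros s Hs. POSQ. Qed.

Lemma inst13 : forall s, 0 < s -> 0 <= G (1/576) (0) (-1/32) (2/9) (0) (0) s.
Proof. apply (G_pos _ _ _ _ _ _ (fun s => (1/72)*s^0 + (1/18)*s^1 + (1/18)*s^2 + (1/6)*s^3 + (1/12)*s^4 + (1/6)*s^5 + (1/18)*s^6 + (1/18)*s^7 + (1/72)*s^8)).
  - intros s Hs. unfold G. field; repeat split; apply Rgt_not_eq; first [nra | apply pow_lt; nra].
  - intros s Hs. POSQ. Qed.

Lemma inst14 : forall s, 0 < s -> 0 <= G (1/192) (-1/3) (1/32) (0) (0) (0) s.
Proof. apply (G_pos _ _ _ _ _ _ (fun s => (1/24)*s^0 + (1/6)*s^1 + (1/3)*s^2 + (1/2)*s^3 + (7/12)*s^4 + (1/2)*s^5 + (1/3)*s^6 + (1/6)*s^7 + (1/24)*s^8)).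
  - intros s Hs. unfold G. field; repeat split; apply Rgt_not_eq; first [nra | apply pow_lt; nra].
  - intros s Hs. POSQ. Qed.

Theorem theorem5p1 (n : nat) (p q : nat -> R) :
  (2 <= n)%nat -> Gamma n p -> Gamma n q ->
  (D_IDelta n p q <= 2/3 * D_hDelta n p q
   /\ 2/3 * D_hDelta n p q <= 2 * D_hI n p q
   /\ 2 * D_hI n p q <= D_TJ n p q)
  /\
  (D_IDelta n p q <= 2/3 * D_hDelta n p q
   /\ 2/3 * D_hDelta n p q <= 1/2 * D_JDelta n p q
   /\ 1/2 * D_JDelta n p q <= 1/3 * D_TDelta n p q
   /\ 1/3 * D_TDelta n p q <= D_TJ n p q)
  /\
  (D_TJ n p q <= 2/3 * D_Th n p q
   /\ 2/3 * D_Th n p q <= 2 * D_Jh n p q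
   /\ 2 * D_Jh n p q <= 1/6 * D_PsiDelta n p q
   /\ 1/6 * D_PsiDelta n p q <= 1/5 * D_PsiI n p q
   /\ 1/5 * D_PsiI n p q <= 2/9 * D_Psih n p q
   /\ 2/9 * D_Psih n p q <= 1/4 * D_PsiJ n p q
   /\ 1/4 * D_PsiJ n p q <= 1/3 * D_PsiT n p q).
Proof.
  intros _ [Hp _] [Hq _].
  pose proof (combo _ _ _ _ _ _ n p q Hp Hq inst1) as H1.
  pose proof (combo _ _ _ _ _ _ n p q Hp Hq inst2) as H2.
  pose proof (combo _ _ _ _ _ _ n p q Hp Hq inst3) as H3.
  pose proof (combo _ _ _ _ _ _ n p q Hp Hq inst5) as H5.
  pose proof (combo _ _ _ _ _ _ n p q Hp Hq inst6) as H6.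
  pose proof (combo _ _ _ _ _ _ n p q Hp Hq inst7) as H7.
  pose proof (combo _ _ _ _ _ _ n p q Hp Hq inst8) as H8.
  pose proof (combo _ _ _ _ _ _ n p q Hp Hq inst9) as H9.
  pose proof (combo _ _ _ _ _ _ n p q Hp Hq inst10) as H10.
  pose proof (combo _ _ _ _ _ _ n p q Hp Hq inst11) as H11.
  pose proof (combo _ _ _ _ _ _ n p q Hp Hq inst12) as H12.
  pose proof (combo _ _ _ _ _ _ n p q Hp Hq inst13) as H13.
  pose proof (combo _ _ _ _ _ _ n p q Hp Hq inst14) as H14.
  unfold D_IDelta, D_hDelta, D_hI, D_TJ, D_JDelta, D_TDelta, D_Th, D_Jh,
    D_PsiDelta, D_PsiI, D_Psih, D_PsiJ, D_PsiT.
  set (vP := Psi n p q) in *. set (vT := Tdiv n p q) in *. set (vJ := Jdiv n p q) in *.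
  set (vh := hel n p q) in *. set (vI := Idiv n p q) in *. set (vD := Delta n p q) in *.
  repeat split; lra.
Qed.
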